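(* Let $(S,\mathcal{A},\mu)$ be a complete, $\sigma$-finite measure space and $X$ an alternatively octahedral real Banach space. Then $L^1(\mu,X)$ and $L^\infty(\mu,X)$ are also alternatively octahedral.
   Context: A real Banach space $X$ is alternatively octahedral (AOH) if for every $n\in\mathbb{N}$, all $x_1,\dots,x_n\in S_X$ (the unit sphere) and every $\varepsilon>0$ there is $y\in S_X$ with $\max\{\|x_i+y\|,\|x_i-y\|\}\ge2-\varepsilon$ for all $i=1,\dots,n$. $L^1(\mu,X)$, $L^\infty(\mu,X)$ are the Lebesgue–Bochner spaces. *)

(* Defs.v *)
From HB Require Import structures.
From mathcomp Require Import all_boot all_order all_algebra.
From mathcomp Require Import all_classical all_reals all_analysis ess_sup_inf.
Set Implicit Arguments. Unset Strict Implicit. Unset Printing Implicit Defensive.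
Import Order.TTheory GRing.Theory Num.Theory.
Import numFieldNormedType.Exports.
Local Open Scope classical_set_scope.
Local Open Scope ring_scope.

(* Alternative octahedrality for a (semi)normed space whose elements are
   the members of the predicate [P] of a type [V] with addition/subtraction
   [add]/[sub] and (semi)norm [N].
   For a seminormed space of representatives, this is exactly AOH of the
   associated quotient normed space (the sphere and the quantities
   N(x +- y) only depend on classes). *)
Definition AOH_on (R : realType) (V : Type) (P : V -> Prop)
    (add sub : V -> V -> V) (N : V -> R) : Prop :=
  forall (n : nat) (x : 'I_n.+1 -> V),
    (forall i, P (x i) /\ N (x i) = 1) ->
    forall eps : R, 0 < eps ->
    exists y : V, [/\ P y, N y = 1 &
      forall i, 2 - eps <= Num.max (N (add (x i) y)) (N (sub (x i) y))].

Definition AOH (R : realType) (X : normedModType R) : Prop :=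
  @AOH_on R X (fun _ => True) (fun a b => a + b) (fun a b => a - b)
    (fun a => `|a|).

Section Bochner.
Context d (T : measurableType d) (R : realType) (X : normedModType R).
Variable mu : {measure set T -> \bar R}.

Definition simple_fun (f : T -> X) : Prop :=
  finite_set (range f) /\ forall x : X, measurable (f @^-1` [set x]).

Definition strongly_measurable (f : T -> X) : Prop :=
  exists s : nat -> T -> X, (forall k, simple_fun (s k)) /\
    {ae mu, forall t, (fun k => s k t) @ \oo --> f t}.

Definition L1_mem (f : T -> X) : Prop :=
  strongly_measurable f /\ (\int[mu]_t (`|f t|)%:E < +oo)%E.
Definition L1_norm (f : T -> X) : R := fine (\int[mu]_t (`|f t|)%:E).

Definition Linf_mem (f : T -> X) : Prop :=
  strongly_measurable f /\ (ess_sup mu (fun t => (`|f t|)%:E) < +oo)%E.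
Definition Linf_norm (f : T -> X) : R := fine (ess_sup mu (fun t => (`|f t|)%:E)).

Definition AOH_L1 : Prop :=
  @AOH_on R (T -> X) L1_mem (fun f g => f \+ g) (fun f g => f \- g) L1_norm.
Definition AOH_Linf : Prop :=
  @AOH_on R (T -> X) Linf_mem (fun f g => f \+ g) (fun f g => f \- g) Linf_norm.
End Bochner.

(* Main.v *)
Require Import Defs.
From HB Require Import structures.
From mathcomp Require Import all_boot all_order all_algebra.
From mathcomp Require Import all_classical all_reals all_analysis ess_sup_inf.
From mathcomp Require Import finmap measurable_realfun.
From mathcomp Require Import lra.
Set Implicit Arguments. Unset Strict Implicit. Unset Printing Implicit Defensive.
Import Order.TTheory GRing.Theory Num.Theory.
Import numFieldNormedType.Exports.
Local Open Scope classical_set_scope.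
Local Open Scope ring_scope.

Section S.
Context d (T : measurableType d) (R : realType) (X : normedModType R).
Variable mu : {measure set T -> \bar R}.

Lemma fin_enum (A : set X) : finite_set A -> exists e : nat -> X, A `<=` range e.
Proof.
move=> fA; exists (fun j => nth 0 (fset_set A : seq X) j) => a Aa.
exists (index a (fset_set A : seq X)) => //; apply: nth_index.
by rewrite in_fset_set //; apply/mem_set. Qed.

Lemma simple_cst (c : X) : simple_fun (fun _ : T => c).
Proof.
rewrite /simple_fun; split.
  apply: (sub_finite_set _ (finite_set1 c)) => _ [t _ <-] //.
move=> x; have [->|ne] := pselect (c = x).
  by rewrite preimage_cst; case: ifPn.
by rewrite preimage_cst ifF //; apply/negbTE/negP => /set_mem. Qed.

Lemma simple_meas (s h : T -> X) (phi : X -> X -> R) :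
  simple_fun s -> simple_fun h -> measurable_fun setT (fun t => phi (s t) (h t)).
Proof.
move=> [fs ms] [fh mh]; have [e he] := fin_enum fs; have [e' he'] := fin_enum fh.
move=> _ Y mY; rewrite setTI.
have -> : (fun t => phi (s t) (h t)) @^-1` Y = \bigcup_j \bigcup_k
    (s @^-1` [set e j] `&` h @^-1` [set e' k] `&` [set _ : T | Y (phi (e j) (e' k))]).
  apply/seteqP; split => [t /= Yt | t [j _ [k _ [[/= sj hk] Yv]]]].
    have [j _ ej] := he (s t) (imageT s t).
    have [k _ ek] := he' (h t) (imageT h t).
    by exists j => //; exists k => //=; rewrite ej ek.
  by rewrite /= sj hk.
apply: bigcupT_measurable => j; apply: bigcupT_measurable => k.
apply: measurableI; first exact: measurableI.
have [y|ny] := pselect (Y (phi (e j) (e' k))).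
  by rewrite (_ : [set _ | _] = setT) //; apply/seteqP; split.
by rewrite (_ : [set _ | _] = set0) //; apply/seteqP; split.
Qed.

Lemma ae_lim_meas (cmu : measure_is_complete mu) (h : (T -> R)^nat) (f : T -> R) :
  (forall m, measurable_fun setT (h m)) ->
  {ae mu, forall t, h ^~ t @ \oo --> f t} -> measurable_fun setT f.
Proof.
move=> mh [N [mN N0 sN]].
have -> : [set: T] = ~` N `|` N by rewrite setUC setUv.
apply/measurable_funU => //; first exact: measurableC.
split.
- apply: (measurable_fun_cvg (h:=h)) => [m|t Nt].
    exact: measurable_funS (mh m).
  by apply: contrapT => nc; apply: Nt; apply: sN.
- move=> _ Y mY; apply: cmu; exists N; split => //; exact: subIsetl.
Qed.

Lemma sm_meas_norm (cmu : measure_is_complete mu) (f h : T -> X) :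
  strongly_measurable mu f -> simple_fun h ->
  measurable_fun setT (fun t => `|f t + h t|).
Proof.
move=> [s [ss aes]] sh.
apply: (ae_lim_meas cmu (h := fun m t => `|s m t + h t|)).
  by move=> m; exact: (simple_meas (fun a b : X => `|a + b|) (ss m) sh).
apply: filterS aes => t st.
exact: (cvg_norm (cvgD st (cvg_cst _))).
Qed.

Lemma approx (f : T -> X) (A : set T) (eta : R) : 0 < eta ->
  strongly_measurable mu f -> ~ mu.-negligible A ->
  exists v : X, ~ mu.-negligible (A `&` [set t | `|f t - v| < eta]).
Proof.
move=> eta0 [s [ss aes]] nA; apply: contrapT => H.
have H' : forall v, mu.-negligible (A `&` [set t | `|f t - v| < eta]).
  by move=> v; apply: contrapT => nv; apply: H; exists v.
have /choice [e he] : forall m, exists e : nat -> X, range (s m) `<=` range e.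
  by move=> m; apply: fin_enum; case: (ss m).
apply: nA.
apply: (@negligibleS _ _ _ _ (~` [set t | s ^~ t @ \oo --> f t] `|`
   \bigcup_m \bigcup_j (A `&` [set t | `|f t - e m j| < eta]))).
- move=> t At; have [c|nc] := pselect (s ^~ t @ \oo --> f t); last by left.
  right; move/cvgrPdist_lt : c => /(_ eta eta0) [N _ HN].
  have [j _ ej] := he N (s N t) (imageT _ t).
  exists N => //; exists j => //; split => //=; rewrite ej.
  by have := HN N (leqnn N); rewrite /= distrC.
- apply: negligibleU => //; apply: negligible_bigcup => m.
  by apply: negligible_bigcup => j; exact: H'.
Qed.

Lemma Linf_lb (F : T -> R) (C : set T) (c M : R) : ~ mu.-negligible C ->
  (forall t, C t -> c <= F t) -> {ae mu, forall t, F t <= M} ->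
  c <= fine (ess_sup mu (fun t => (F t)%:E)).
Proof.
move=> nC cF aeM.
have hup : (ess_sup mu (fun t => (F t)%:E) <= M%:E)%E.
  by apply/ess_supP; apply: filterS aeM => t; rewrite lee_fin.
have hlo : (c%:E <= ess_sup mu (fun t => (F t)%:E))%E.
  rewrite /ess_sup; apply: le_ereal_inf_tmp => y /= aey.
  rewrite leNgt; apply/negP => yc; apply: nC.
  apply: negligibleS aey => t Ct /= Fy.
  have := cF t Ct; rewrite -lee_fin => /le_trans/(_ Fy).
  by rewrite leNgt yc.
move: hup hlo; case: (ess_sup _ _) => [r| |] //=.
Qed.

Lemma aoh_ineq0 (u w : X) (a b del : R) : `|u| = 1 -> `|w| = 1 ->
  2 - del <= `|u + w| -> b <= a -> 0 <= b -> 0 <= del ->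
  (1 - del) * (a + b) <= `|a *: u + b *: w|.
Proof.
move=> nu nw h ba b0 d0.
have -> : a *: u + b *: w = a *: (u + w) - (a - b) *: w.
  by rewrite scalerDr scalerBl opprB -addrA [a *: w + _]addrC subrK.
apply: le_trans (lerB_dist _ _).
rewrite !normrZ nw (ger0_norm (le_trans b0 ba)) ger0_norm ?subr_ge0 //.
have a0 : 0 <= a by apply: le_trans b0 ba.
have : a * (2 - del) <= a * `|u + w| by apply: ler_wpM2l.
nra.
Qed.

Lemma aoh_ineq (u w : X) (a b del : R) : `|u| = 1 -> `|w| = 1 ->
  2 - del <= `|u + w| -> 0 <= a -> 0 <= b -> 0 <= del ->
  (1 - del) * (a + b) <= `|a *: u + b *: w|.
Proof.
move=> nu nw h a0 b0 d0; have [ba|ab] := leP b a.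
  exact: aoh_ineq0.
rewrite [a + b]addrC [X in _ <= `|X|]addrC; apply: aoh_ineq0 => //; last exact: ltW.
by rewrite [w + u]addrC. Qed.

Lemma norm_sub_normalize (v : X) : v != 0 ->
  `|v - `|v|^-1 *: v| = `| `|v| - 1|.
Proof.
move=> v0; have nv0 : `|v| != 0 by rewrite normr_eq0.
rewrite -{1}(scale1r v) -scalerBl normrZ -[X in _ * X]normr_id -normrM.
by rewrite mulrBl mul1r mulVf.
Qed.

Lemma Linf_key (f : T -> X) (v w : X) (del : R) :
  0 < del -> del <= 1/4 -> 1 - 2 * del < `|v| -> `|v| < 1 + del -> `|w| = 1 ->
  2 - del <= `| `|v|^-1 *: v + w| ->
  {ae mu, forall t, `|f t| <= 1} ->
  ~ mu.-negligible [set t | `|f t - v| < del] ->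
  2 - 4 * del <= fine (ess_sup mu (fun t => (`|f t + w|)%:E)).
Proof.
move=> d0 d4 v1 v2 nw h ae1 nC.
apply: (Linf_lb (M := 2) nC).
  move=> t /= ft.
  have v0 : v != 0 by rewrite -normr_eq0; apply/eqP => v0; rewrite v0 in v1; lra.
  have e1 := norm_sub_normalize v0.
  have e2 : `| `|v| - 1| <= 2 * del by rewrite ler_norml; apply/andP; split; lra.
  have t1 : `|f t - `|v|^-1 *: v| <= `|f t - v| + `|v - `|v|^-1 *: v|.
    have -> : f t - `|v|^-1 *: v = (f t - v) + (v - `|v|^-1 *: v) by rewrite addrA subrK.
    exact: ler_normD.
  have t2 : `| `|v|^-1 *: v + w| <= `|f t + w| + `|f t - `|v|^-1 *: v|.
    have -> : `|v|^-1 *: v + w = (f t + w) - (f t - `|v|^-1 *: v).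
      by rewrite opprB [RHS]addrC addrA subrK.
    exact: ler_normB.
  lra.
apply: filterS ae1 => t ft.
by apply: le_trans (ler_normD _ _) _; rewrite nw; lra.
Qed.

Lemma Linf_thm : AOH X -> @AOH_Linf d T R X mu.
Proof.
move=> aoh n f hf eps eps0.
pose del := Num.min eps 1 / 8.
have d0 : 0 < del by rewrite /del divr_gt0 // lt_min eps0 ltr01.
have d1 : del <= 1/8 by rewrite /del ler_pM2r // ge_min lexx orbT.
have de : del <= eps/8 by rewrite /del ler_pM2r // ge_min lexx.
have step : forall i, exists v : X, [/\ 1 - 2 * del < `|v|, `|v| < 1 + del,
    {ae mu, forall t, `|f i t| <= 1} &
    ~ mu.-negligible [set t | `|f i t - v| < del]].
  move=> i; have [[smf esf] nf] := hf i.
  have es1 : ess_sup mu (fun t => (`|f i t|)%:E) = 1%:E.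
    move: esf nf; rewrite /Linf_norm.
    case: (ess_sup _ _) => [r _ /= -> //| // | _ /esym/eqP].
    by rewrite oner_eq0.
  have ae1 : {ae mu, forall t, `|f i t| <= 1}.
    by apply: filterS (ess_sup_ge mu (fun t => (`|f i t|)%:E)) => t; rewrite es1 lee_fin.
  pose A := [set t | 1 - del < `|f i t| <= 1].
  have nA : ~ mu.-negligible A.
    move=> nA.
    have : (ess_sup mu (fun t => (`|f i t|)%:E) <= (1 - del)%:E)%E.
      apply/ess_supP; apply: (negligibleS _ (negligibleU nA ae1)) => t /= H.
      have [h1|h1] := leP (`|f i t|) 1; last by right.
      by left; apply/andP; split => //; rewrite ltNge; apply/negP => H2; apply: H; rewrite lee_fin.
    by rewrite es1 lee_fin; lra.
  have [v nv] := approx d0 smf nA.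
  have /set0P [t [/andP [At1 At2] vt]] : A `&` [set t | `|f i t - v| < del] != set0.
    by apply/eqP => E; apply: nv; rewrite E; exact: negligible_set0.
  exists v; split => //.
  - have := ler_normD (f i t - v) v; rewrite subrK /=; move: vt => /= vt; lra.
  - have := ler_normD (v - f i t) (f i t); rewrite subrK distrC /=; move: vt => /= vt; lra.
  - by move=> H; apply: nv; apply: negligibleS H; exact: subIsetr.
have /choice [v hv] := step.
pose u i := `|v i|^-1 *: v i.
have nu : forall i, True /\ `|u i| = 1.
  move=> i; split => //; have [v1 _ _ _] := hv i.
  have nv0 : `|v i| != 0 by apply/eqP => E; rewrite E in v1; lra.
  by rewrite /u normrZ ger0_norm ?invr_ge0 // mulVf.
have [y [_ ny hy]] := aoh n u nu del d0.
have muT : (0 < mu [set: T])%E.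
  rewrite lt0e measure_ge0 andbT; apply/eqP => m0.
  have [_ _ _ nC] := hv ord0; apply: nC.
  by apply: (negligibleS (subsetT _)); apply/negligibleP => //.
have ess1 : ess_sup mu (fun _ : T => (`|y|)%:E) = 1%:E by rewrite ny ess_sup_cst.
exists (fun _ => y); split.
- split; last by rewrite ess1 ltry.
  exists (fun _ _ => y); split; first by move=> k; exact: simple_cst.
  by apply: aeW => t; exact: cvg_cst.
- by rewrite /Linf_norm ess1.
- move=> i; have [v1 v2 ae1 nC] := hv i.
  have e4 : 2 - eps <= 2 - 4 * del by lra.
  have d4 : del <= 1/4 by lra.
  move: (hy i); rewrite le_max => /orP [hp|hm]; rewrite le_max; apply/orP.
  + left; apply: le_trans e4 _.
    rewrite /Linf_norm /=.
    exact: (Linf_key (f := f i) d0 d4 v1 v2 ny hp ae1 nC).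
  + right; apply: le_trans e4 _.
    rewrite /Linf_norm /=.
    by apply: (Linf_key (f := f i) (w := - y) d0 d4 v1 v2 _ hm ae1 nC); rewrite normrN.
Qed.

Lemma meas_const (P : Prop) : measurable [set _ : T | P].
Proof.
have [p|np] := pselect P.
  by rewrite (_ : [set _ | P] = setT) //; apply/seteqP; split.
by rewrite (_ : [set _ | P] = set0) //; apply/seteqP; split.
Qed.

Lemma simple_ind (B : set T) (w : X) : measurable B ->
  simple_fun (fun t => if t \in B then w else 0).
Proof.
move=> mB; split.
  apply: (sub_finite_set _ (finite_set2 w 0)) => _ [t _ <-].
  by case: (t \in B); [left|right].
move=> x.
have -> : (fun t => if t \in B then w else 0) @^-1` [set x] =
    (B `&` [set _ | w = x]) `|` (~` B `&` [set _ | 0 = x]).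
  apply/seteqP; split => t /=; have [tB|tB] := pselect (B t).
  - by rewrite (mem_set tB) => ?; left.
  - by rewrite (memNset tB) => ?; right.
  - by rewrite (mem_set tB) => -[[]|[]].
  - by rewrite (memNset tB) => -[[]|[]].
apply: measurableU; apply: measurableI => //; first exact: meas_const.
  exact: measurableC.
exact: meas_const.
Qed.

Lemma simple_sm (h : T -> X) : simple_fun h -> strongly_measurable mu h.
Proof. by move=> sh; exists (fun _ => h); split => //; apply: aeW => t; exact: cvg_cst. Qed.

Lemma L1_meas (cmu : measure_is_complete mu) (f : T -> X) :
  strongly_measurable mu f -> measurable_fun setT (fun t => `|f t|).
Proof.
move=> sf; have := sm_meas_norm cmu sf (simple_cst 0).
by rewrite (_ : (fun t => `|f t + 0|) = (fun t => `|f t|)) //; apply/funext => t; rewrite addr0.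
Qed.

Lemma L1_int (cmu : measure_is_complete mu) (f : T -> X) :
  L1_mem mu f -> mu.-integrable setT (EFin \o (fun t => `|f t|)).
Proof.
move=> [sf fin]; apply/integrableP; split.
  by apply/measurable_EFinP; exact: L1_meas.
by rewrite (eq_integral (fun t => (`|f t|)%:E)) // => t _; rewrite /= normr_id.
Qed.

Lemma indic_int (B : set T) : measurable B -> (mu B < +oo)%E ->
  mu.-integrable setT (EFin \o (\1_B : T -> R)).
Proof.
move=> mB fB; apply/integrableP; split.
  by apply/measurable_EFinP; exact: measurable_indic.
rewrite (eq_integral (fun t => (\1_B t)%:E)); last first.
  by move=> t _; rewrite /= ger0_norm.
by rewrite integral_indic // setIT.
Qed.

Lemma Rint_indic (B : set T) : measurable B ->
  Rintegral mu setT (\1_B : T -> R) = fine (mu B).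
Proof. by move=> mB; rewrite /Rintegral integral_indic // setIT. Qed.

Lemma L1_key (cmu : measure_is_complete mu) (f : T -> X) (B : set T)
    (v w e : X) (del eta : R) :
  L1_mem mu f -> L1_norm mu f = 1 -> measurable B -> (mu B < +oo)%E ->
  0 < fine (mu B) -> (forall t, B t -> `|f t - v| < eta) ->
  eta * fine (mu B) <= del -> 0 <= del -> del <= 1 -> 0 <= eta ->
  `|w| = 1 -> `|e| = 1 ->
  2 - del <= `|(if v == 0 then e else `|v|^-1 *: v) + w| ->
  2 - 5 * del <= Rintegral mu setT
     (fun t => `|f t + (if t \in B then (fine (mu B))^-1 *: w else 0)|).
Proof.
move=> L1f nf mB fB mB0 fv emb d0 d1 eta0 nw ne hu.
set c := (fine (mu B))^-1.
have c0 : 0 < c by rewrite invr_gt0.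
have cm : c * fine (mu B) = 1 by rewrite mulVf // gt_eqF.
pose K := c * (1 - del) - 3 * eta.
pose g t := if t \in B then c *: w else 0.
have intf := L1_int cmu L1f.
have intB := indic_int mB fB.
have intL : mu.-integrable setT
    (EFin \o (fun t => (1 - del) * `|f t| + K * (\1_B t : R))).
  exact: (integrableD measurableT (integrableZl measurableT _ intf)
                                  (integrableZl measurableT _ intB)).
have measG : measurable_fun setT (fun t => `|f t + g t|).
  exact: (sm_meas_norm cmu L1f.1 (simple_ind (c *: w) mB)).
have intG : mu.-integrable setT (EFin \o (fun t => `|f t + g t|)).
  apply: (le_integrable measurableT _ _ (integrableD measurableT intf
                                  (integrableZl measurableT c intB))).
    exact/measurable_EFinP.
  move=> t _; rewrite /= normr_id ger0_norm; last first.
    by rewrite addr_ge0 // mulr_ge0 // ltW.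
  apply: le_trans (ler_normD _ _) _; rewrite lerD2l /g indicE.
  by case: (t \in B); rewrite ?normr0 ?mulr0 // normrZ nw mulr1 mulr1 ger0_norm // ltW.
have pw : forall t, (1 - del) * `|f t| + K * (\1_B t : R) <= `|f t + g t|.
  move=> t; rewrite indicE /g; have [tB|tB] := boolP (t \in B) => /=.
  - have ft := fv t (set_mem tB).
    have h1 : (1 - del) * (`|v| + c) <= `|v + c *: w|.
      have [v0|v0] := eqVneq v 0.
        rewrite v0 eqxx in hu; rewrite v0 add0r normrZ nw mulr1 normr0 add0r ger0_norm; last exact: ltW.
        nra.
      rewrite (negbTE v0) in hu.
      have nv0 : `|v| != 0 by rewrite normr_eq0.
      have nu : `| `|v|^-1 *: v| = 1 by rewrite normrZ ger0_norm ?invr_ge0 // mulVf.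
      have := aoh_ineq (a := `|v|) (b := c) nu nw hu (normr_ge0 _) (ltW c0) d0.
      by rewrite scalerA mulfV // scale1r.
    have h2 : `|v + c *: w| <= `|f t + c *: w| + `|f t - v|.
      have -> : v + c *: w = (f t + c *: w) - (f t - v).
        by rewrite opprB [RHS]addrC addrA subrK.
      exact: ler_normB.
    have h3 : `|f t| <= `|v| + eta.
      by have := ler_normD (f t - v) v; rewrite subrK; lra.
    have h4 : (1 - del) * `|f t| <= (1 - del) * (`|v| + eta).
      by apply: ler_wpM2l => //; lra.
    have h5 : 0 <= del * eta by apply: mulr_ge0.
    rewrite /K; nra.
  - rewrite mulr0 !addr0; have := normr_ge0 (f t); nra.
have := le_Rintegral measurableT intL intG (fun t _ => pw t).
rewrite RintegralD //; last exact: (integrableZl measurableT _ intB).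
  2: exact: (integrableZl measurableT _ intf).
rewrite !RintegralZl // Rint_indic //.
change (Rintegral mu setT (fun t => `|f t|) = 1) in nf.
rewrite nf mulr1 => h.
have : K * fine (mu B) = (1 - del) - 3 * (eta * fine (mu B)).
  by rewrite /K mulrBl [c * _]mulrC -mulrA cm mulr1 mulrA.
move: h; rewrite /g; nra.
Qed.

Lemma multi_approx n (f : 'I_n.+1 -> T -> X) (A : set T) (eta : R) : 0 < eta ->
  (forall i, strongly_measurable mu (f i)) -> ~ mu.-negligible A ->
  exists v : 'I_n.+1 -> X,
    ~ mu.-negligible (A `&` [set t | forall i, `|f i t - v i| < eta]).
Proof.
move=> eta0 sf nA.
suff : forall m, exists v : 'I_n.+1 -> X, ~ mu.-negligible
    (A `&` [set t | forall i : 'I_n.+1, (i < m)%N -> `|f i t - v i| < eta]).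
  move=> /(_ n.+1) [v hv]; exists v => H; apply: hv; apply: negligibleS H.
  by move=> t [At Ht]; split => // i; exact: Ht i (ltn_ord i).
elim => [|m [v hv]].
  exists (fun _ => 0) => H; apply: nA; apply: negligibleS H => t At.
  by split => // i; rewrite ltn0.
have [mn|nm] := ltnP m n.+1.
  pose i0 := Ordinal mn.
  have [w hw] := approx eta0 (sf i0) hv.
  exists (fun i => if i == i0 then w else v i) => H; apply: hw.
  apply: negligibleS H => t [[At Ht] wt]; split => // i.
  have [->|ne] := eqVneq i i0; first by move=> _; exact: wt.
  rewrite ltnS leq_eqVlt => /orP [/eqP E|im]; last exact: Ht.
  by exfalso; move/eqP: ne; apply; apply: val_inj.
exists v => H; apply: hv; apply: negligibleS H => t [At Ht]; split => // i _.
by apply: Ht; exact: leq_trans (ltn_ord i) nm.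
Qed.

Lemma L1_thm (cmu : measure_is_complete mu) : sigma_finite setT mu ->
  AOH X -> @AOH_L1 d T R X mu.
Proof.
move=> [F Fcup Fm] aoh n f hf eps eps0.
pose del := Num.min eps 1 / 5.
have d0 : 0 < del by rewrite /del divr_gt0 // lt_min eps0 ltr01.
have d1 : del <= 1/5 by rewrite /del ler_pM2r // ge_min lexx orbT.
have de : del <= eps/5 by rewrite /del ler_pM2r // ge_min lexx.
have int1 : forall i, (\int[mu]_t (`|f i t|)%:E = 1%:E)%E.
  move=> i; have [[sfi fin] nfi] := hf i; move: fin nfi; rewrite /L1_norm.
  case: (integral _ _ _) => [r _ /= -> // | // | _ /esym/eqP].
  by rewrite oner_eq0.
have [k nk] : exists k, ~ mu.-negligible (F k).
  apply: contrapT => H.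
  have H' : forall k, mu.-negligible (F k).
    by move=> k; apply: contrapT => nk; apply: H; exists k.
  have : mu.-negligible setT by rewrite Fcup; exact: negligible_bigcup.
  move/(negligibleP _ measurableT) => mT.
  have := int1 ord0; rewrite null_set_integral //; last first.
    apply/measurable_EFinP; exact: (L1_meas cmu (proj1 (proj1 (hf ord0)))).
  by case => /eqP; rewrite eq_sym oner_eq0.
have [mA fA] := Fm k.
pose M := fine (mu (F k)).
have M0 : 0 <= M by rewrite fine_ge0 // measure_ge0.
pose eta := del / (M + 1).
have M1 : 0 < M + 1 by lra.
have eta0 : 0 < eta by rewrite /eta divr_gt0.
have [v hv] := multi_approx eta0 (fun i => (proj1 (proj1 (hf i)))) nk.
pose B := F k `&` [set t | forall i, `|f i t - v i| < eta].
have mB : measurable B.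
  apply: measurableI => //.
  rewrite (_ : [set t | _] = \bigcap_(i in setT) [set t | `|f i t - v i| < eta]); last first.
    by apply/seteqP; split => t /= H i; [move=> _|]; apply: H.
  apply: fin_bigcap_measurable; first exact: finite_finset.
  move=> i _.
  have := sm_meas_norm cmu (proj1 (proj1 (hf i))) (simple_cst (- v i)) measurableT
     (measurable_itv `]-oo, eta[).
  rewrite setTI => h.
  suff -> : [set t | `|f i t - v i| < eta] =
    (fun t => `|f i t + - v i|) @^-1` [set` `]-oo, eta[] by [].
  by apply/seteqP; split => t /=; rewrite in_itv /=.
have muBA : (mu B <= mu (F k))%E.
  by apply: le_measure; [exact: mem_set mB|exact: mem_set mA|exact: subIsetl].
have fB : (mu B < +oo)%E := le_lt_trans muBA fA.
have mBpos : (0 < mu B)%E.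
  rewrite lt0e measure_ge0 andbT; apply/eqP => m0; apply: hv.
  exact/(negligibleP _ mB).
have mBr : 0 < fine (mu B) by apply: fine_gt0; rewrite mBpos fB.
have mBM : fine (mu B) <= M.
  by apply: fine_le => //; rewrite ge0_fin_numE ?measure_ge0.
have emb : eta * fine (mu B) <= del.
  have : eta * (M + 1) = del by rewrite /eta divfK // gt_eqF.
  have : eta * fine (mu B) <= eta * (M + 1) by apply: ler_wpM2l; [exact: ltW|lra].
  lra.
have [t0 nt0] : exists t, f ord0 t != 0.
  apply: contrapT => H.
  have H' : forall t, f ord0 t = 0.
    by move=> t; apply: contrapT => /eqP ?; apply: H; exists t.
  have := int1 ord0; rewrite (eq_integral (cst 0%E)) ?integral0.
    by case => /eqP; rewrite eq_sym oner_eq0.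
  by move=> t _; rewrite H' normr0.
pose e := `|f ord0 t0|^-1 *: f ord0 t0.
have ne : `|e| = 1.
  have nv0 : `|f ord0 t0| != 0 by rewrite normr_eq0.
  by rewrite /e normrZ ger0_norm ?invr_ge0 // mulVf.
pose u i := if v i == 0 then e else `|v i|^-1 *: v i.
have nu : forall i, True /\ `|u i| = 1.
  move=> i; split => //; rewrite /u; have [//|v0] := eqVneq (v i) 0.
  have nv0 : `|v i| != 0 by rewrite normr_eq0.
  by rewrite normrZ ger0_norm ?invr_ge0 // mulVf.
have [y [_ ny hy]] := aoh n u nu del d0.
pose c := (fine (mu B))^-1.
have c0 : 0 < c by rewrite invr_gt0.
pose g t := if t \in B then c *: y else 0.
have gint : (\int[mu]_t (`|g t|)%:E = 1%:E)%E.
  rewrite (eq_integral (fun t => (c%:E * (\1_B t)%:E)%E)); last first.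
    move=> t _; rewrite /g indicE; case: (t \in B) => /=.
      by rewrite mule1 normrZ ny mulr1 ger0_norm // ltW.
    by rewrite normr0 mule0.
  rewrite integralZl //; last exact: indic_int.
  rewrite integral_indic // setIT -(fineK (x := mu B)); last first.
    by rewrite ge0_fin_numE ?measure_ge0.
  by rewrite -EFinM mulVf // gt_eqF.
exists g; split.
- split; first exact: simple_sm (simple_ind _ mB).
  by rewrite gint ltry.
- by rewrite /L1_norm gint.
- move=> i; have [[sfi fin] nfi] := hf i.
  have fvi : forall t, B t -> `|f i t - v i| < eta by move=> t [_ H]; exact: H i.
  have e5 : 2 - eps <= 2 - 5 * del by lra.
  have dd1 : del <= 1 by lra.
  move: (hy i); rewrite le_max => /orP [hp|hm]; rewrite le_max; apply/orP.
  + left; apply: (le_trans e5).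
    exact: (L1_key cmu (proj1 (hf i)) nfi mB fB mBr fvi emb (ltW d0) dd1
              (ltW eta0) ny ne hp).
  + right; apply: (le_trans e5).
    have -> : L1_norm mu (f i \- g) = Rintegral mu setT
        (fun t => `|f i t + (if t \in B then (fine (mu B))^-1 *: (- y) else 0)|).
      rewrite /L1_norm /Rintegral; congr fine; apply: eq_integral => t _ /=.
      by rewrite /g; case: (t \in B); rewrite ?scalerN ?oppr0.
    apply: (L1_key cmu (proj1 (hf i)) nfi mB fB mBr fvi emb (ltW d0) dd1
              (ltW eta0) _ ne hm) => //.
    by rewrite normrN.
Qed.
End S.

Unset Implicit Arguments.

Theorem proposition4p4 (d : measure_display) (T : measurableType d)
  (R : realType) (mu : {measure set T -> \bar R})
  (X : completeNormedModType R) :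
  measure_is_complete mu -> sigma_finite setT mu ->
  AOH X -> @AOH_L1 d T R X mu /\ @AOH_Linf d T R X mu.
Proof.
move=> cmu sf aoh; split.
- exact: (L1_thm cmu sf aoh).
- exact: (@Linf_thm d T R X mu aoh).
Qed.
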